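(* Let $S$ be a simple $(l,r)$-framed algebra, $C_S=\{\alpha\in\mathbb{Z}_2^{l+r}:S_{(0,\alpha)}\ne0\}$ (a subgroup), and let $\varepsilon:C_S\times C_S\to\{\pm1\}$ be a bimultiplicative map with $\varepsilon(\alpha,\alpha)=(-1)^{|\alpha|/2}$ and $\varepsilon(\alpha,\beta)\varepsilon(\beta,\alpha)=(-1)^{|\alpha\beta|}$ for all $\alpha,\beta\in C_S$. Let $\mathbb{C}[\hat C_S]$ be the algebra with basis $\{e_\alpha\}_{\alpha\in C_S}$ and product $e_\alpha e_\beta=\varepsilon(\alpha,\beta)e_{\alpha+\beta}$, graded by putting $e_\alpha$ in degree $(0,\alpha)$. Then there is a grading-preserving $\mathbb{C}$-algebra isomorphism between $A_S(0)=\bigoplus_{\alpha\in C_S}S_{(0,\alpha)}$ (with the product of $S$) and $\mathbb{C}[\hat C_S]$.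
   Context: Let $\mathrm{IS}=\{0,\frac12,\frac1{16}\}$ with fusion rule $\star$ (values are subsets): $0\star h=h\star0=\{h\}$, $\frac12\star\frac12=\{0\}$, $\frac12\star\frac1{16}=\frac1{16}\star\frac12=\{\frac1{16}\}$, $\frac1{16}\star\frac1{16}=\{0,\frac12\}$; $A(h_0,h_1,h_2,h_3)=\{h: h\in h_2\star h_3,\ h_0\in h_1\star h\}$. For $h\in A(h_0,h_1,h_2,h_3)$, $h'\in A(h_0,h_2,h_1,h_3)$ define $B^{h,h'}_{h_0,h_1,h_2,h_3}$: $B_{*,0,*,*}=B_{*,*,0,*}=1$; $B_{*,\frac12,\frac12,*}=-1$; $B_{a,\frac12,\frac1{16},a'}=B_{a,\frac1{16},\frac12,a'}=i$ if $a$ or $a'$ is $\frac12$, else $-i$; $B^{b,b'}_{a,\frac1{16},\frac1{16},a'}=e^{-\pi i/8}\cdot\{1$ if $a,a'\ne\frac1{16},a=a'$; $i$ if $a,a'\neq\frac1{16},a\ne a'$; $\frac{1+i}2$ if $a=a'=\frac1{16},b=b'$; $\frac{1-i}2$ if $a=a'=\frac1{16},b\neq b'\}$. $\mathrm{IS}^{(l,r)}=\mathrm{IS}^l\times\mathrm{IS}^r$, $\lambda=(h_1,..,h_l,\bar h_1,..,\bar h_r)$, $s(\lambda)=\sum h_i-\sum\bar h_j$; $\star$, $A$ componentwise; $B^{\lambda,\lambda'}_{\lambda^0,\dots,\lambda^3}=\prod_{i\le l}B^{h_i,h'_i}_{h^0_i,\dots,h^3_i}\prod_{j\le r}\overline{B^{\bar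 h_j,\bar h'_j}_{\bar h^0_j,\dots,\bar h^3_j}}$. An $(l,r)$-framed algebra: finite-dimensional $\mathrm{IS}^{(l,r)}$-graded $S=\bigoplus S_\lambda$ over $\mathbb{C}$ with bilinear product, nonzero $1\in S_0$, $a\cdot_\lambda b$ the $S_\lambda$-component of $a\cdot b$, satisfying (FA1) $S_\lambda=0$ unless $s(\lambda)\in\mathbb{Z}$; (FA2) $S_0=\mathbb{C}1$, $1$ a two-sided unit; (FA3) $S_{\lambda^1}\cdot S_{\lambda^2}\subset\bigoplus_{\lambda\in\lambda^1\star\lambda^2}S_\lambda$; (FA4) $a_2\cdot_{\lambda^0}(a_1\cdot_{\lambda'}a_3)=\sum_{\lambda\in A(\lambda^0,\lambda^1,\lambda^2,\lambda^3)}B^{\lambda,\lambda'}_{\lambda^0,\lambda^1,\lambda^2,\lambda^3}a_1\cdot_{\lambda^0}(a_2\cdot_\lambda a_3)$ for $a_i\in S_{\lambda^i}$, $\lambda'\in A(\lambda^0,\lambda^2,\lambda^1,\lambda^3)$. Ideal: graded subspace $M$ with $S\cdot M\subset M$; simple: only ideals $0$ and $S$. Identify $\mathrm{IS}$ with $\{(d,c)\in\mathbb{Z}_2^2:dc=0\}$ via $0\leftrightarrow(0,0)$, $\frac12\leftrightarrow(0,1)$, $\frac1{16}\leftrightarrow(1,0)$, and componentwise $\mathrm{IS}^{(l,r)}$ with pairs $(d,c)\in(\mathbb{Z}_2^{l+r})^2$, $dc=0$. For $c\in\mathbb{Z}_2^{l+r}$, $|c|=|c|_l-|c|_r$ where $|c|_l,|c|_r$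 count ones in the first $l$ and last $r$ coordinates; products of codewords are componentwise. *)

(* Defs.v *)
From HB Require Import structures.
From mathcomp Require Import all_boot all_order all_algebra.
From mathcomp Require Import reals trigo.
From mathcomp.real_closed Require Import complex.

Set Implicit Arguments.
Unset Strict Implicit.
Unset Printing Implicit Defensive.

Import Order.TTheory GRing.Theory Num.Theory.
Local Open Scope ring_scope.

Inductive IS := H0 | Hhalf | H16.

Definition IS_to_ord (h : IS) : 'I_3 :=
  match h with H0 => inord 0 | Hhalf => inord 1 | H16 => inord 2 end.
Definition IS_of_ord (i : 'I_3) : IS :=
  match val i with 0 => H0 | 1 => Hhalf | _ => H16 end.
Lemma IS_ordK : cancel IS_to_ord IS_of_ord.
Proof. by case; rewrite /IS_of_ord /= inordK. Qed.

HB.instance Definition _ := Equality.copy IS (can_type IS_ordK).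
HB.instance Definition _ := Choice.copy IS (can_type IS_ordK).
HB.instance Definition _ := Countable.copy IS (can_type IS_ordK).
HB.instance Definition _ := Finite.copy IS (can_type IS_ordK).

Definition hval (h : IS) : rat :=
  match h with H0 => 0 | Hhalf => 1 / 2%:R | H16 => 1 / 16%:R end.

(* fusion rule: [star h1 h2 h] means  h \in h1 * h2 *)
Definition star (h1 h2 h : IS) : bool :=
  match h1, h2 with
  | H0, _ => h == h2
  | _, H0 => h == h1
  | Hhalf, Hhalf => h == H0
  | Hhalf, H16 | H16, Hhalf => h == H16
  | H16, H16 => (h == H0) || (h == Hhalf)
  end.

Definition Amem (h0 h1 h2 h3 h : IS) : bool := star h2 h3 h && star h1 h h0.

Section Complex.
Variable R : realType.
Local Notation C := R[i].

Definition zeta16 : C := ((cos (pi / 8%:R : R)) -i* (sin (pi / 8%:R : R)))%C.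

Definition iC : C := 'i%C.

(* B^{b,b'}_{a,h1,h2,a'}  (only meaningful for b in A(a,h1,h2,a'),
   b' in A(a,h2,h1,a'); the value 0 is a never-used default) *)
Definition Bfun (b b' a h1 h2 a' : IS) : C :=
  match h1, h2 with
  | H0, _ | _, H0 => 1
  | Hhalf, Hhalf => -1
  | Hhalf, H16 | H16, Hhalf =>
      if (a == Hhalf) || (a' == Hhalf) then iC else - iC
  | H16, H16 =>
      zeta16 *
      (if (a != H16) && (a' != H16) then (if a == a' then 1 else iC)
       else if (a == H16) && (a' == H16) then
              (if b == b' then (1 + iC) / 2%:R else (1 - iC) / 2%:R)
       else 0)
  end.
End Complex.

Definition Lambda (l r : nat) := ({ffun 'I_l -> IS} * {ffun 'I_r -> IS})%type.

Definition lam0 {l r : nat} : Lambda l r := ([ffun => H0], [ffun => H0]).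

Definition sL {l r : nat} (lam : Lambda l r) : rat :=
  \sum_(i < l) hval (lam.1 i) - \sum_(j < r) hval (lam.2 j).

Definition starL {l r : nat} (lam1 lam2 lam : Lambda l r) : bool :=
  [forall i, star (lam1.1 i) (lam2.1 i) (lam.1 i)] &&
  [forall j, star (lam1.2 j) (lam2.2 j) (lam.2 j)].

Definition AL {l r : nat} (l0 l1 l2 l3 lam : Lambda l r) : bool :=
  [forall i, Amem (l0.1 i) (l1.1 i) (l2.1 i) (l3.1 i) (lam.1 i)] &&
  [forall j, Amem (l0.2 j) (l1.2 j) (l2.2 j) (l3.2 j) (lam.2 j)].

Definition BL (R : realType) {l r : nat} (lam lam' l0 l1 l2 l3 : Lambda l r) : R[i] :=
  (\prod_(i < l) Bfun R (lam.1 i) (lam'.1 i) (l0.1 i) (l1.1 i) (l2.1 i) (l3.1 i)) *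
  (\prod_(j < r) ((Bfun R (lam.2 j) (lam'.2 j) (l0.2 j) (l1.2 j) (l2.2 j) (l3.2 j))^*)%C).

Section Framed.
Variables (R : realType) (l r : nat) (V : vectType R[i]).
Variables (Sg : Lambda l r -> {vspace V}) (mul : V -> V -> V) (one : V).

Definition grcomp (lam : Lambda l r) (v : V) : V :=
  daddv_pi (Sg lam) (\sum_(mu | mu != lam) Sg mu)%VS v.

Definition graded : Prop :=
  (\sum_(lam : Lambda l r) Sg lam)%VS = fullv /\
  directv (\sum_(lam : Lambda l r) Sg lam).

Definition bilinear_mul : Prop :=
  (forall (k : R[i]) a b c, mul (k *: a + b) c = k *: mul a c + mul b c) /\
  (forall (k : R[i]) a b c, mul a (k *: b + c) = k *: mul a b + mul a c).

Definition FA1 : Prop :=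
  forall lam, sL lam \isn't a Num.int -> Sg lam = 0%VS.

Definition FA2 : Prop :=
  [/\ one != 0, Sg lam0 = <[one]>%VS & forall a, mul one a = a /\ mul a one = a].

Definition FA3 : Prop :=
  forall l1 l2 a b, a \in Sg l1 -> b \in Sg l2 ->
    mul a b \in (\sum_(lam | starL l1 l2 lam) Sg lam)%VS.

Definition FA4 : Prop :=
  forall l0 l1 l2 l3 lam' a1 a2 a3,
    a1 \in Sg l1 -> a2 \in Sg l2 -> a3 \in Sg l3 -> AL l0 l2 l1 l3 lam' ->
    grcomp l0 (mul a2 (grcomp lam' (mul a1 a3))) =
    \sum_(lam | AL l0 l1 l2 l3 lam)
       BL R lam lam' l0 l1 l2 l3 *: grcomp l0 (mul a1 (grcomp lam (mul a2 a3))).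

Definition framed_algebra : Prop :=
  [/\ graded, bilinear_mul, FA1, FA2 & FA3 /\ FA4].

Definition is_ideal (M : {vspace V}) : Prop :=
  M = (\sum_(lam : Lambda l r) (M :&: Sg lam))%VS /\
  (forall a m, m \in M -> mul a m \in M).

Definition simple_framed : Prop :=
  forall M, is_ideal M -> M = 0%VS \/ M = fullv.
End Framed.

(* Codewords: Z_2^(l+r), identified with pairs of boolean functions    *)
Definition Code (l r : nat) := ({ffun 'I_l -> bool} * {ffun 'I_r -> bool})%type.

Definition code0 {l r : nat} : Code l r := ([ffun => false], [ffun => false]).

Definition code_add {l r : nat} (a b : Code l r) : Code l r :=
  ([ffun i => a.1 i (+) b.1 i], [ffun j => a.2 j (+) b.2 j]).

Definition code_mul {l r : nat} (a b : Code l r) : Code l r :=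
  ([ffun i => a.1 i && b.1 i], [ffun j => a.2 j && b.2 j]).

Definition wt {l r : nat} (a : Code l r) : int :=
  (\sum_(i < l) nat_of_bool (a.1 i))%:Z - (\sum_(j < r) nat_of_bool (a.2 j))%:Z.

(* (0,alpha) as an element of IS^(l,r): 1 <-> 1/2, 0 <-> 0 *)
Definition lamc {l r : nat} (a : Code l r) : Lambda l r :=
  ([ffun i => if a.1 i then Hhalf else H0], [ffun j => if a.2 j then Hhalf else H0]).

Definition CS (R : realType) (l r : nat) (V : vectType R[i])
  (Sg : Lambda l r -> {vspace V}) : {set Code l r} :=
  [set a | Sg (lamc a) != 0%VS].

Definition AS0 (R : realType) (l r : nat) (V : vectType R[i])
  (Sg : Lambda l r -> {vspace V}) : {vspace V} :=
  (\sum_(a in CS Sg) Sg (lamc a))%VS.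

(* The twisted group algebra C[hat C_S], realised inside the functions *)
(* Code -> C as the span of the e_alpha (alpha in C_S), with product   *)
(* e_alpha e_beta = eps(alpha,beta) e_(alpha+beta).                    *)
Definition ebas (R : realType) {l r : nat} (a : Code l r) : {ffun Code l r -> R[i]} :=
  [ffun g => (g == a)%:R].

Definition tmul (R : realType) {l r : nat} (eps : Code l r -> Code l r -> R[i])
  (f g : {ffun Code l r -> R[i]}) : {ffun Code l r -> R[i]} :=
  [ffun c => \sum_(a : Code l r) \sum_(b : Code l r)
                 if code_add a b == c then eps a b * f a * g b else 0].

Definition graded_alg_iso (R : realType) (l r : nat) (V : vectType R[i])
  (Sg : Lambda l r -> {vspace V}) (mul : V -> V -> V) (one : V)
  (eps : Code l r -> Code l r -> R[i]) (phi : V -> {ffun Code l r -> R[i]}) : Prop :=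
  (forall (k : R[i]) a b, a \in AS0 Sg -> b \in AS0 Sg ->
         phi (k *: a + b) = k *: phi a + phi b) /\
      (forall a, a \in AS0 Sg -> phi a = 0 -> a = 0) /\
      (forall f : {ffun Code l r -> R[i]},
         (forall c, c \notin CS Sg -> f c = 0) -> exists2 a, a \in AS0 Sg & phi a = f) /\
      (forall a b, a \in AS0 Sg -> b \in AS0 Sg -> phi (mul a b) = tmul eps (phi a) (phi b)) /\
      phi one = ebas R code0 /\
      (forall c a, c \in CS Sg -> a \in Sg (lamc c) -> exists k : R[i], phi a = k *: ebas R c).

(* Main.v *)
Require Import Defs.
From HB Require Import structures.
From mathcomp Require Import all_boot all_order all_algebra.
From mathcomp Require Import reals trigo.
From mathcomp.real_closed Require Import complex.
From mathcomp Require Import ring.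
Import Order.TTheory GRing.Theory Num.Theory.
Local Open Scope ring_scope.
Set Implicit Arguments.
Unset Strict Implicit.

Definition shiftIS (b : bool) (h : IS) : IS :=
  if b then match h with H0 => Hhalf | Hhalf => H0 | H16 => H16 end else h.

Definition shiftL {l r : nat} (a : Code l r) (lam : Lambda l r) : Lambda l r :=
  ([ffun i => shiftIS (a.1 i) (lam.1 i)], [ffun j => shiftIS (a.2 j) (lam.2 j)]).

Lemma star_shift b h h0 :
  star (if b then Hhalf else H0) h h0 = (h0 == shiftIS b h).
Proof. by case: b; case: h; case: h0. Qed.

Section Comb.
Variables l r : nat.
Implicit Types a b c : Code l r.
Implicit Types lam mu : Lambda l r.

Lemma starL_lamc a lam mu : starL (lamc a) lam mu = (mu == shiftL a lam).
Proof.
case: mu => m1 m2; rewrite /starL /shiftL /lamc xpair_eqE.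
apply/andP/andP => [[/forallP H1 /forallP H2]|[/eqP -> /eqP ->]].
  split; apply/eqP/ffunP => i; rewrite ffunE.
    by move: (H1 i); rewrite /= ffunE star_shift => /eqP.
  by move: (H2 i); rewrite /= ffunE star_shift => /eqP.
by split; apply/forallP => i; rewrite /= !ffunE star_shift.
Qed.

Lemma AL_lamc l0 a l2 l3 lam :
  AL l0 (lamc a) l2 l3 lam = starL l2 l3 lam && (l0 == shiftL a lam).
Proof.
case: l0 => m1 m2; rewrite /AL /starL /shiftL /lamc /Amem xpair_eqE.
apply/andP/andP => [[/forallP H1 /forallP H2]|[/andP[/forallP H1 /forallP H2] /andP[/eqP E1 /eqP E2]]].
  split; first by apply/andP; split; apply/forallP => i;
    [case/andP: (H1 i) | case/andP: (H2 i)].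
  apply/andP; split; apply/eqP/ffunP => i; rewrite ffunE.
    by case/andP: (H1 i) => _; rewrite /= ffunE star_shift => /eqP.
  by case/andP: (H2 i) => _; rewrite /= ffunE star_shift => /eqP.
split; apply/forallP => i; rewrite /= !ffunE star_shift ?H1 ?H2 /=.
  by rewrite E1 ffunE.
by rewrite E2 ffunE.
Qed.

Lemma shiftIS_hb x y :
  shiftIS x (if y then Hhalf else H0) = if x (+) y then Hhalf else H0.
Proof. by case: x; case: y. Qed.

Lemma lamc_add a b : lamc (code_add a b) = shiftL a (lamc b).
Proof.
rewrite /lamc /shiftL /code_add; congr pair; apply/ffunP => i;
  by rewrite !ffunE shiftIS_hb.
Qed.

Lemma shiftISK x : involutive (shiftIS x).
Proof. by case: x => //; case. Qed.

Lemma shiftLK a : involutive (shiftL a).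
Proof.
case=> m1 m2; rewrite /shiftL; congr pair; apply/ffunP => i;
  by rewrite !ffunE shiftISK.
Qed.

Lemma shiftL_inj a : injective (shiftL a).
Proof. exact: inv_inj (shiftLK a). Qed.

Lemma shiftL_comm a b lam : shiftL a (shiftL b lam) = shiftL b (shiftL a lam).
Proof.
rewrite /shiftL; congr pair; apply/ffunP => i; rewrite !ffunE.
  by case: (a.1 i); case: (b.1 i); case: (lam.1 i).
by case: (a.2 i); case: (b.2 i); case: (lam.2 i).
Qed.

Lemma lamc_inj : injective (@lamc l r).
Proof.
case=> a1 a2 [b1 b2]; rewrite /lamc => [[E1 E2]]; congr pair; apply/ffunP => i.
  by move/ffunP: E1 => /(_ i); rewrite !ffunE /=; case: (a1 i); case: (b1 i).
by move/ffunP: E2 => /(_ i); rewrite !ffunE /=; case: (a2 i); case: (b2 i).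
Qed.

Lemma lamc0 : lamc (@code0 l r) = lam0.
Proof. by rewrite /lamc /lam0; congr pair; apply/ffunP => i; rewrite !ffunE. Qed.

Lemma code_addC a b : code_add a b = code_add b a.
Proof. by rewrite /code_add; congr pair; apply/ffunP => i; rewrite !ffunE addbC. Qed.

Lemma code_addA a b c : code_add a (code_add b c) = code_add (code_add a b) c.
Proof. by rewrite /code_add; congr pair; apply/ffunP => i; rewrite !ffunE addbA. Qed.

Lemma code_add0 a : code_add code0 a = a.
Proof. by case: a => a1 a2; rewrite /code_add; congr pair; apply/ffunP => i; rewrite !ffunE. Qed.

Lemma code_addr0 a : code_add a code0 = a.
Proof. by rewrite code_addC code_add0. Qed.

Lemma code_addK a : code_add a a = code0.
Proof. by rewrite /code_add; congr pair; apply/ffunP => i; rewrite !ffunE addbb. Qed.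

Lemma code_addKl a b : code_add a (code_add a b) = b.
Proof. by rewrite code_addA code_addK code_add0. Qed.

Lemma Bfun_hb (R : realType) (b b' a a' : IS) x y :
  Bfun R b b' a (if x then Hhalf else H0) (if y then Hhalf else H0) a' =
  (-1) ^+ (x && y).
Proof. by case: x; case: y; rewrite /= ?expr1 ?expr0. Qed.

Lemma BL_lamc (R : realType) lam lam' l0 a b l3 :
  BL R lam lam' l0 (lamc a) (lamc b) l3 = (-1) ^ (wt (code_mul a b)).
Proof.
rewrite /BL /wt /lamc /code_mul /=.
under eq_bigr do rewrite !ffunE Bfun_hb.
under [X in _ * X]eq_bigr do rewrite !ffunE Bfun_hb rmorphXn rmorphN1.
rewrite !prodrXr.
under [X in _ = _ ^ (X%:Z - _)]eq_bigr do rewrite ffunE.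
under [X in _ = _ ^ (_ - X%:Z)]eq_bigr do rewrite ffunE.
set m := (\sum_(i < l) _)%N; set n := (\sum_(i < r) _)%N.
rewrite expfzDr ?oppr_eq0 ?oner_eq0 //.
by rewrite -exprz_inv invrN1.
Qed.
End Comb.
Section Cohom.
Variables (K : numClosedFieldType) (l r : nat).
Variable G : {set Code l r}.
Variable d : Code l r -> Code l r -> K.
Local Notation "a +c b" := (code_add a b) (at level 50, left associativity).
Hypothesis G0 : code0 \in G.
Hypothesis GD : forall a b, a \in G -> b \in G -> a +c b \in G.
Hypothesis dnz : forall a b, a \in G -> b \in G -> d a b != 0.
Hypothesis dsym : forall a b, a \in G -> b \in G -> d a b = d b a.
Hypothesis d0 : forall a, a \in G -> d code0 a = 1.
Hypothesis dC : forall a b c, a \in G -> b \in G -> c \in G ->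
  d a b * d (a +c b) c = d b c * d a (b +c c).

Definition subgrp (H : {set Code l r}) :=
  code0 \in H /\ forall a b, a \in H -> b \in H -> a +c b \in H.

Definition Claim (H : {set Code l r}) :=
  exists t : Code l r -> K, t code0 = 1 /\ (forall a, a \in H -> t a != 0) /\
    (forall a b, a \in H -> b \in H -> t (a +c b) = d a b * t a * t b).

Lemma I1 g a h : g \in G -> a \in G -> h \in G ->
  d g (a +c h) * d a h = d a (g +c h) * d g h.
Proof.
move=> Gg Ga Gh.
have := dC Ga Gh Gg.
rewrite [d (a +c h) g]dsym ?GD // [d h g]dsym // [h +c g]code_addC => E.
by rewrite mulrC E mulrC.
Qed.

Lemma I2 g h h' : g \in G -> h \in G -> h' \in G ->
  d h h' * d g g = d (g +c h) (g +c h') * d g h * d g h'.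
Proof.
move=> Gg Gh Gh'.
set w := g +c (h +c h').
have Gw : w \in G by rewrite GD ?GD.
have A := dC Gg Gh (GD Gg Gh').
have B := dC Gg Gg (GD Gh Gh').
have Cc := dC Gh Gg Gh'.
have Dd := dC Gg Gh Gh'.
rewrite code_addK d0 ?GD // mulr1 in B.
have Ew : h +c (g +c h') = w by rewrite /w !code_addA [h +c g]code_addC.
rewrite Ew in A.
rewrite B [d (g +c h) (g +c h') * d g h]mulrC A mulrAC [d h (g +c h') * _]mulrC -Cc.
by rewrite [d h g]dsym // [h +c g]code_addC Dd mulrA.
Qed.

Lemma ext_step (H : {set Code l r}) (g : Code l r) : {subset H <= G} -> subgrp H -> g \in G -> g \notin H ->
  Claim H -> subgrp [set a | (a \in H) || (g +c a \in H)] /\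
             Claim [set a | (a \in H) || (g +c a \in H)].
Proof.
move=> sHG [H0 HD] Gg gH [t [t0 [tnz tD]]].
have HG a : a \in H -> a \in G by move/sHG.
split.
  split; first by rewrite inE H0.
  move=> a b; rewrite !inE => /orP[Ha|Ha] /orP[Hb|Hb].
  - by apply/orP; left; apply: HD.
  - by apply/orP; right; rewrite code_addA [g +c a]code_addC -code_addA; apply: HD.
  - by apply/orP; right; rewrite code_addA; apply: HD.
  - have -> : a +c b = (g +c a) +c (g +c b).
      by rewrite code_addA [_ +c g]code_addC code_addA code_addK code_add0.
    by apply/orP; left; apply: HD.
set tg := (sqrtC (d g g))^-1.
have dgg : d g g != 0 by apply: dnz.
have tgnz : tg != 0 by rewrite invr_eq0 sqrtC_eq0.
have tg2 : tg * tg * d g g = 1.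
  by rewrite /tg -invfM -expr2 sqrtCK mulVf.
pose t' a := if a \in H then t a else d g (g +c a) * tg * t (g +c a).
have case2 a h : a \in H -> h \in H ->
    t' (a +c (g +c h)) = d a (g +c h) * t' a * t' (g +c h).
  move=> Ha Hh.
  have nH x : x \in H -> g +c x \notin H.
    move=> Hx; apply/negP => Hgx; move/negP: gH; apply.
    by have := HD _ _ Hgx Hx; rewrite -code_addA code_addK code_addr0.
  have E : a +c (g +c h) = g +c (a +c h).
    by rewrite !code_addA [a +c g]code_addC.
  rewrite /t' E (negPf (nH _ (HD _ _ Ha Hh))) Ha (negPf (nH _ Hh)) !code_addKl.
  rewrite tD //.
  have := I1 Gg (HG _ Ha) (HG _ Hh) => I.
  transitivity ((d g (a +c h) * d a h) * (tg * t a * t h)); first by ring.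
  by rewrite I; ring.
exists t'; split; first by rewrite /t' H0.
split.
  move=> a; rewrite inE /t'; case: ifP => [Ha _|_ /= Hga]; first exact: tnz.
  rewrite !mulf_neq0 ?tnz //; apply: dnz => //.
  exact: HG.
move=> a b; rewrite !inE => /orP[Ha|Ha] /orP[Hb|Hb].
- by rewrite /t' Ha Hb HD // tD.
- by rewrite -(code_addKl g b) case2.
- have [h Hh ->] : exists2 h, h \in H & a = g +c h by exists (g +c a); rewrite ?code_addKl.
  have Gh : h \in G by exact: HG.
  rewrite code_addC [d _ b]dsym ?case2 1?mulrAC //; first by apply: GD.
  exact: HG.
- have [h Hh ->] : exists2 h, h \in H & a = g +c h by exists (g +c a); rewrite ?code_addKl.
  have [h' Hh' ->] : exists2 h, h \in H & b = g +c h by exists (g +c b); rewrite ?code_addKl.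
  have Eab : (g +c h) +c (g +c h') = h +c h'.
    by rewrite code_addA [_ +c g]code_addC code_addA code_addK code_add0.
  have nH x : x \in H -> g +c x \notin H.
    move=> Hx; apply/negP => Hgx; move/negP: gH; apply.
    by have := HD _ _ Hgx Hx; rewrite -code_addA code_addK code_addr0.
  rewrite Eab {1}/t' HD // tD // /t' !(negPf (nH _ _)) // !code_addKl.
  have := I2 Gg (HG _ Hh) (HG _ Hh') => I.
  transitivity (d h h' * d g g * (tg * tg) * t h * t h').
    by rewrite -[in LHS](mulr1 (d h h')) -tg2; ring.
  by rewrite I; ring.
Qed.
Lemma claimG : Claim G.
Proof.
suff main : forall n (H : {set Code l r}), (#|G :\: H| <= n)%N -> {subset H <= G} ->
    subgrp H -> Claim H -> Claim G.
  apply: (main _ [set code0]) => //.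
  - by move=> a; rewrite inE => /eqP ->.
  - split; first by rewrite inE.
    by move=> a b; rewrite !inE => /eqP -> /eqP ->; rewrite code_add0.
  - exists (fun _ => 1); split => //; split => [a _|a b]; first exact: oner_neq0.
    by rewrite !inE => /eqP -> /eqP ->; rewrite d0 ?mulr1.
elim=> [|n IH] H cardH sHG sgH clH.
  case: (boolP (G \subset H)) => [sGH|].
    case: clH => t [t0 [tnz tD]]; exists t; split => //; split.
      by move=> a Ga; apply: tnz; apply: (subsetP sGH).
    by move=> a b Ga Gb; apply: tD; apply: (subsetP sGH).
  case/subsetPn => g Gg gH.
  have : g \in G :\: H by rewrite inE gH Gg.
  move=> gGH; have : (0 < #|G :\: H|)%N by apply/card_gt0P; exists g.
  by rewrite lt0n; move: cardH; rewrite leqn0 => ->.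
case: (boolP (G \subset H)) => [sGH|].
  case: clH => t [t0 [tnz tD]]; exists t; split => //; split.
    by move=> a Ga; apply: tnz; apply: (subsetP sGH).
  by move=> a b Ga Gb; apply: tD; apply: (subsetP sGH).
case/subsetPn => g Gg gH.
have [sg' cl'] := ext_step sHG sgH Gg gH clH.
apply: (IH _ _ _ sg' cl').
  have : G :\: [set a | (a \in H) || (g +c a \in H)] \proper G :\: H.
    apply/properP; split.
      by apply/subsetP => x; rewrite !inE negb_or => /andP[/andP[-> _] ->].
    by exists g; rewrite !inE ?gH ?Gg // code_addK (proj1 sgH) orbT.
  by move/proper_card => lt; rewrite -ltnS (leq_trans lt).
move=> a; rewrite inE => /orP[/sHG //|Hga].
by rewrite -(code_addKl g a); apply: GD => //; apply: sHG.
Qed.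
End Cohom.
Section Main.
Variables (R : realType) (l r : nat) (V : vectType R[i]).
Variables (Sg : Lambda l r -> {vspace V}) (mul : V -> V -> V) (one : V).
Hypothesis Hfr : framed_algebra Sg mul one.
Hypothesis Hsimp : simple_framed Sg mul.

Local Notation gr := (grcomp Sg).

Lemma Hsum : (\sum_(lam : Lambda l r) Sg lam)%VS = fullv.
Proof. by case: Hfr => [[]]. Qed.
Lemma Hdir : directv (\sum_(lam : Lambda l r) Sg lam).
Proof. by case: Hfr => [[]]. Qed.
Lemma Hml : forall (k : R[i]) a b c, mul (k *: a + b) c = k *: mul a c + mul b c.
Proof. by case: Hfr => _ []. Qed.
Lemma Hmr : forall (k : R[i]) a b c, mul a (k *: b + c) = k *: mul a b + mul a c.
Proof. by case: Hfr => _ []. Qed.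
Lemma Hone : one != 0. Proof. by case: Hfr => _ _ _ []. Qed.
Lemma HS0 : Sg lam0 = <[one]>%VS. Proof. by case: Hfr => _ _ _ []. Qed.
Lemma Hunit a : mul one a = a /\ mul a one = a. Proof. by case: Hfr => _ _ _ []. Qed.
Lemma HFA3 : FA3 Sg mul. Proof. by case: Hfr => _ _ _ _ []. Qed.
Lemma HFA4 : FA4 Sg mul. Proof. by case: Hfr => _ _ _ _ []. Qed.

Definition mulL (a : V) := mul a.
Definition mulR (b : V) := fun a => mul a b.
Lemma mulL_lin a : linear (mulL a).
Proof. by move=> k x y; rewrite /mulL Hmr. Qed.
Lemma mulR_lin b : linear (mulR b).
Proof. by move=> k x y; rewrite /mulR Hml. Qed.
HB.instance Definition _ a := GRing.isLinear.Build _ V V *:%R (mulL a) (mulL_lin a).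
HB.instance Definition _ b := GRing.isLinear.Build _ V V *:%R (mulR b) (mulR_lin b).

Lemma mul_sumr a (I : Type) (s : seq I) (P : pred I) (F : I -> V) :
  mul a (\sum_(i <- s | P i) F i) = \sum_(i <- s | P i) mul a (F i).
Proof. exact: (linear_sum (mulL a)). Qed.
Lemma mul_suml b (I : Type) (s : seq I) (P : pred I) (F : I -> V) :
  mul (\sum_(i <- s | P i) F i) b = \sum_(i <- s | P i) mul (F i) b.
Proof. exact: (linear_sum (mulR b)). Qed.
Lemma mulv0 a : mul a 0 = 0. Proof. exact: (linear0 (mulL a)). Qed.
Lemma mul0v b : mul 0 b = 0. Proof. exact: (linear0 (mulR b)). Qed.
Lemma mulvZ a k b : mul a (k *: b) = k *: mul a b. Proof. exact: (linearZ_LR (mulL a)). Qed.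
Lemma mulZv a k b : mul (k *: a) b = k *: mul a b. Proof. exact: (linearZ_LR (mulR b)). Qed.
Lemma mulvB a b c : mul a (b - c) = mul a b - mul a c. Proof. exact: (linearB (mulL a)). Qed.

Lemma dirS lam : (Sg lam :&: (\sum_(mu | mu != lam) Sg mu) = 0)%VS.
Proof. exact: (directv_sumP Hdir). Qed.

Lemma grcompE lam v : gr lam v = daddv_pi (Sg lam) (\sum_(mu | mu != lam) Sg mu)%VS v.
Proof. by []. Qed.

Lemma grcomp_mem lam v : gr lam v \in Sg lam.
Proof. exact: memv_pi. Qed.
Lemma grcomp_id lam v : v \in Sg lam -> gr lam v = v.
Proof. by move=> Hv; rewrite grcompE daddv_pi_id // dirS. Qed.
Lemma grcomp0 lam : gr lam 0 = 0.
Proof. by rewrite grcompE linear0. Qed.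
Lemma grcompZ lam k v : gr lam (k *: v) = k *: gr lam v.
Proof. by rewrite !grcompE linearZ. Qed.
Lemma grcompD lam u v : gr lam (u + v) = gr lam u + gr lam v.
Proof. by rewrite !grcompE linearD. Qed.
Lemma grcomp_sum lam (I : Type) (s : seq I) (P : pred I) (F : I -> V) :
  gr lam (\sum_(i <- s | P i) F i) = \sum_(i <- s | P i) gr lam (F i).
Proof. by rewrite grcompE linear_sum. Qed.

Lemma grcomp_out lam mu v : v \in Sg mu -> mu != lam -> gr lam v = 0.
Proof.
move=> Hv nml.
set W := (\sum_(mu | mu != lam) Sg mu)%VS.
have HW : v \in W by apply: (subvP (sumv_sup mu nml (subvv _))).
have HUW : v \in (Sg lam + W)%VS by apply: (subvP (addvSr _ _)).
have := daddv_pi_add (dirS lam) HUW.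
rewrite (daddv_pi_id _ HW); last by rewrite capvC dirS.
by rewrite grcompE => /(canRL (addrK v)); rewrite subrr.
Qed.

Lemma grcomp_sumf (I : finType) (f : I -> Lambda l r) (finj : injective f)
  (P : pred I) (vs : I -> V) i0 :
  (forall i, P i -> vs i \in Sg (f i)) ->
  gr (f i0) (\sum_(i | P i) vs i) = if P i0 then vs i0 else 0.
Proof.
move=> Hvs; rewrite grcomp_sum.
case: ifP => Pi0.
  rewrite (bigD1 i0) //= grcomp_id ?Hvs // big1 ?addr0 // => i /andP[Pi ni].
  by apply: (grcomp_out (Hvs _ Pi)); apply: contra ni => /eqP /finj ->.
apply: big1 => i Pi; apply: (grcomp_out (Hvs _ Pi)).
by apply: contraFN Pi0 => /eqP /finj <-.
Qed.

Lemma decomp v : v = \sum_lam gr lam v.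
Proof.
have : v \in (\sum_(lam : Lambda l r) Sg lam)%VS by rewrite Hsum memvf.
case/memv_sumP => vs Hvs Ev.
have E lam : gr lam v = vs lam.
  by rewrite Ev (grcomp_sumf (f := id)).
by under eq_bigr do rewrite E.
Qed.

Lemma grcomp_in_sum (P : pred (Lambda l r)) lam v :
  v \in (\sum_(mu | P mu) Sg mu)%VS -> ~~ P lam -> gr lam v = 0.
Proof.
case/memv_sumP => vs Hvs -> nP.
by rewrite (grcomp_sumf (f := id)) // (negPf nP).
Qed.

Lemma mul_shift (al : Code l r) lam a b :
  a \in Sg (lamc al) -> b \in Sg lam -> mul a b \in Sg (shiftL al lam).
Proof.
move=> Ha Hb; have := HFA3 Ha Hb.
by rewrite (big_pred1 (shiftL al lam)) // => mu; rewrite starL_lamc.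
Qed.

Definition kerL (a : V) : {vspace V} := lker (linfun (mulL a)).
Lemma memv_kerL a v : (v \in kerL a) = (mul a v == 0).
Proof. by rewrite memv_ker lfunE. Qed.

Lemma kerL_graded (al : Code l r) a x :
  a \in Sg (lamc al) -> mul a x = 0 -> forall lam, mul a (gr lam x) = 0.
Proof.
move=> Ha ax0 lam.
have S0 : \sum_mu mul a (gr mu x) = 0 by rewrite -mul_sumr -decomp.
have := grcomp_sumf (@shiftL_inj l r al) (P := predT) (vs := fun mu => mul a (gr mu x)) lam.
rewrite S0 grcomp0 /= => <- // mu _.
exact: mul_shift (grcomp_mem _ _).
Qed.

Lemma key (al : Code l r) a b m l1 l3 :
  a \in Sg (lamc al) -> b \in Sg l1 -> m \in Sg l3 -> mul a m = 0 ->
  mul a (mul b m) = 0.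
Proof.
move=> Ha Hb Hm am0.
rewrite [mul b m]decomp mul_sumr big1 // => mu _.
case: (boolP (starL l1 l3 mu)) => H.
  have AL1 : AL (shiftL al mu) (lamc al) l1 l3 mu by rewrite AL_lamc H eqxx.
  have := HFA4 Hb Ha Hm AL1.
  rewrite grcomp_id; last exact: mul_shift (grcomp_mem _ _).
  move=> ->; apply: big1 => lam _.
  by rewrite am0 grcomp0 mulv0 grcomp0 scaler0.
by rewrite (grcomp_in_sum (HFA3 Hb Hm) H) mulv0.
Qed.

Lemma ideal_ker (al : Code l r) a : a \in Sg (lamc al) -> is_ideal Sg mul (kerL a).
Proof.
move=> Ha; split.
  apply/eqP; rewrite eqEsubv; apply/andP; split.
    apply/subvP => x; rewrite memv_kerL => /eqP Hx.
    rewrite [x]decomp; apply: memv_sumr => lam _.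
    by rewrite memv_cap grcomp_mem memv_kerL (kerL_graded Ha Hx) eqxx.
  by apply/subv_sumP => lam _; apply: capvSl.
move=> b m; rewrite !memv_kerL => /eqP Hm; apply/eqP.
rewrite [b]decomp mul_suml mul_sumr big1 // => l1 _.
rewrite [m]decomp mul_sumr mul_sumr big1 // => l3 _.
apply: (key Ha (grcomp_mem _ _) (grcomp_mem _ _)).
exact: kerL_graded Ha Hm _.
Qed.

Lemma ker_triv (al : Code l r) a x :
  a \in Sg (lamc al) -> a != 0 -> mul a x = 0 -> x = 0.
Proof.
move=> Ha anz ax0.
case: (Hsimp (ideal_ker Ha)) => [K0|Kf].
  have : x \in kerL a by rewrite memv_kerL ax0.
  by rewrite K0 memv0 => /eqP.
have : one \in kerL a by rewrite Kf memvf.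
by rewrite memv_kerL (proj2 (Hunit a)) (negPf anz).
Qed.

Lemma scal_cancel (x : V) (k1 k2 : R[i]) : x != 0 -> k1 *: x = k2 *: x -> k1 = k2.
Proof.
move=> xnz /eqP; rewrite -subr_eq0 -scalerBl scaler_eq0 (negPf xnz) orbF subr_eq0.
by move/eqP.
Qed.

Local Notation CSS := (CS Sg).
Local Notation "a +c b" := (code_add a b) (at level 50, left associativity).

Lemma inCS a : (a \in CSS) = (Sg (lamc a) != 0%VS).
Proof. by rewrite inE. Qed.

Definition xb (a : Code l r) : V := if a == code0 then one else vpick (Sg (lamc a)).

Lemma xb_mem a : xb a \in Sg (lamc a).
Proof.
rewrite /xb; case: (a =P code0) => [->|_]; last exact: memv_pick.
by rewrite lamc0 HS0 memv_line.
Qed.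

Lemma xb_nz a : a \in CSS -> xb a != 0.
Proof.
rewrite inCS /xb; case: (a =P code0) => [_ _|_]; first exact: Hone.
by rewrite vpick0.
Qed.

Lemma xb0 : xb code0 = one.
Proof. by rewrite /xb eqxx. Qed.

Lemma CS0 : code0 \in CSS.
Proof.
rewrite inCS lamc0 HS0; apply/negP => /eqP E.
by move: (memv_line one); rewrite E memv0 (negPf Hone).
Qed.

Lemma mem_nz_CS a v : v \in Sg (lamc a) -> v != 0 -> a \in CSS.
Proof.
move=> Hv vnz; rewrite inCS; apply/negP => /eqP E.
by move: Hv; rewrite E memv0 (negPf vnz).
Qed.

Lemma S0_line (a : Code l r) v : v \in Sg (lamc (a +c a)) -> exists k, v = k *: one.
Proof. by rewrite code_addK lamc0 HS0 => /vlineP. Qed.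

Lemma mulxx_sh (a : Code l r) u v : u \in Sg (lamc a) -> v \in Sg (lamc a) ->
  mul u v \in Sg (lamc (a +c a)).
Proof. by move=> Hu Hv; rewrite lamc_add; apply: mul_shift. Qed.

Lemma line a v : a \in CSS -> v \in Sg (lamc a) -> exists k, v = k *: xb a.
Proof.
move=> Ca Hv; set x := xb a.
have Hx : x \in Sg (lamc a) by apply: xb_mem.
have [s Es] := S0_line (mulxx_sh Hx Hv).
have [t Et] := S0_line (mulxx_sh Hx Hx).
have tnz : t != 0.
  apply/negP => /eqP t0; move: Et; rewrite t0 scale0r => /(ker_triv Hx (xb_nz Ca)).
  by move/eqP; rewrite (negPf (xb_nz Ca)).
exists (s / t).
have : mul x (t *: v - s *: x) = 0.
  by rewrite mulvB !mulvZ Es Et !scalerA mulrC subrr.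
move/(ker_triv Hx (xb_nz Ca))/eqP; rewrite subr_eq0 => /eqP E.
by apply: (scalerI tnz); rewrite E scalerA mulrC divfK.
Qed.

Lemma CSD a b : a \in CSS -> b \in CSS -> a +c b \in CSS.
Proof.
move=> Ca Cb; apply: (@mem_nz_CS _ (mul (xb a) (xb b))).
  by rewrite lamc_add; apply: mul_shift; apply: xb_mem.
apply/negP => /eqP E; move: (ker_triv (xb_mem a) (xb_nz Ca) E).
by move/eqP; rewrite (negPf (xb_nz Cb)).
Qed.

Definition coefx (a : Code l r) (v : V) : R[i] := coord [tuple xb a] 0 v.

Lemma coefxE a v : a \in CSS -> v \in Sg (lamc a) -> v = coefx a v *: xb a.
Proof.
move=> Ca Hv; have [k ->] := line Ca Hv.
rewrite /coefx linearZ /=.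
have fr : free [tuple xb a] by rewrite /= seq1_free xb_nz.
by rewrite (coord_free 0 0 fr) eqxx mulr1.
Qed.

Definition cc (a b : Code l r) : R[i] := coefx (a +c b) (mul (xb a) (xb b)).

Lemma ccE a b : a \in CSS -> b \in CSS -> mul (xb a) (xb b) = cc a b *: xb (a +c b).
Proof.
move=> Ca Cb; apply: coefxE; first exact: CSD.
by rewrite lamc_add; apply: mul_shift; apply: xb_mem.
Qed.

Lemma cc_nz a b : a \in CSS -> b \in CSS -> cc a b != 0.
Proof.
move=> Ca Cb; apply/negP => /eqP c0.
have := ccE Ca Cb; rewrite c0 scale0r => /(ker_triv (xb_mem a) (xb_nz Ca)).
by move/eqP; rewrite (negPf (xb_nz Cb)).
Qed.

Lemma cc0l a : a \in CSS -> cc code0 a = 1.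
Proof.
move=> Ca; apply: (scal_cancel (xb_nz Ca)).
have := ccE CS0 Ca; rewrite code_add0 xb0 (proj1 (Hunit _)) => E.
by rewrite -E scale1r.
Qed.

Lemma cc0r a : a \in CSS -> cc a code0 = 1.
Proof.
move=> Ca; apply: (scal_cancel (xb_nz Ca)).
have := ccE Ca CS0; rewrite code_addr0 xb0 (proj2 (Hunit _)) => E.
by rewrite -E scale1r.
Qed.

Lemma basis_FA4 a b c : a \in CSS -> b \in CSS -> c \in CSS ->
  mul (xb b) (mul (xb a) (xb c)) =
  (-1) ^ (wt (code_mul a b)) *: mul (xb a) (mul (xb b) (xb c)).
Proof.
move=> Ca Cb Cc.
have AL1 : AL (shiftL b (shiftL a (lamc c))) (lamc b) (lamc a) (lamc c) (shiftL a (lamc c)).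
  by rewrite AL_lamc starL_lamc !eqxx.
have := HFA4 (xb_mem a) (xb_mem b) (xb_mem c) AL1.
have Hac : mul (xb a) (xb c) \in Sg (shiftL a (lamc c)) by apply: mul_shift; apply: xb_mem.
have Hbac : mul (xb b) (mul (xb a) (xb c)) \in Sg (shiftL b (shiftL a (lamc c))).
  by apply: mul_shift => //; apply: xb_mem.
have Hbc : mul (xb b) (xb c) \in Sg (shiftL b (lamc c)) by apply: mul_shift; apply: xb_mem.
have Habc : mul (xb a) (mul (xb b) (xb c)) \in Sg (shiftL b (shiftL a (lamc c))).
  by rewrite shiftL_comm; apply: mul_shift => //; apply: xb_mem.
rewrite (grcomp_id Hac) (grcomp_id Hbac) => ->.
rewrite (big_pred1 (shiftL b (lamc c))); last first.
  move=> lam; rewrite AL_lamc starL_lamc /=.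
  by case: eqP => [->|] //=; rewrite shiftL_comm eqxx.
by rewrite BL_lamc (grcomp_id Hbc) (grcomp_id Habc).
Qed.

Definition sig (a b : Code l r) : R[i] := (-1) ^ (wt (code_mul a b)).

Lemma ccR a b c : a \in CSS -> b \in CSS -> c \in CSS ->
  cc a c * cc b (a +c c) = sig a b * (cc b c * cc a (b +c c)).
Proof.
move=> Ca Cb Cc.
have := basis_FA4 Ca Cb Cc.
have Cac := CSD Ca Cc; have Cbc := CSD Cb Cc.
rewrite (ccE Ca Cc) mulvZ (ccE Cb Cac) (ccE Cb Cc) mulvZ (ccE Ca Cbc).
have -> : b +c (a +c c) = a +c (b +c c) by rewrite !code_addA [b +c a]code_addC.
rewrite !scalerA => E; apply: (scal_cancel (xb_nz (CSD Ca Cbc))).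
by rewrite E /sig !mulrA.
Qed.

Variable eps : Code l r -> Code l r -> R[i].
Hypothesis Heps1 : forall a b, a \in CSS -> b \in CSS -> eps a b = 1 \/ eps a b = -1.
Hypothesis Hbim : forall a b c, a \in CSS -> b \in CSS -> c \in CSS ->
  eps (a +c b) c = eps a c * eps b c /\ eps a (b +c c) = eps a b * eps a c.
Hypothesis Hcomm : forall a b, a \in CSS -> b \in CSS -> eps a b * eps b a = sig a b.

Lemma eps_sq a b : a \in CSS -> b \in CSS -> eps a b * eps a b = 1.
Proof. by move=> Ca Cb; case: (Heps1 Ca Cb) => ->; rewrite ?mulr1 ?mulrNN ?mulr1. Qed.

Lemma eps_nz a b : a \in CSS -> b \in CSS -> eps a b != 0.
Proof.
move=> Ca Cb; apply/negP => /eqP e0; move: (eps_sq Ca Cb); rewrite e0 mul0r.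
by move/eqP; rewrite eq_sym oner_eq0.
Qed.

Lemma eps0 a : a \in CSS -> eps code0 a = 1.
Proof.
move=> Ca; have [E _] := Hbim CS0 CS0 Ca; rewrite code_add0 in E.
have := eps_sq CS0 Ca; rewrite -{1}E => E1.
exact: E1.
Qed.

Definition dd (a b : Code l r) : R[i] := cc a b * eps a b.

Lemma dd_nz a b : a \in CSS -> b \in CSS -> dd a b != 0.
Proof. by move=> Ca Cb; rewrite mulf_neq0 ?cc_nz ?eps_nz. Qed.

Lemma dd0 a : a \in CSS -> dd code0 a = 1.
Proof. by move=> Ca; rewrite /dd cc0l // eps0 // mulr1. Qed.

Lemma ccsym a b : a \in CSS -> b \in CSS -> cc b a = sig a b * cc a b.
Proof.
move=> Ca Cb; have := ccR Ca Cb CS0.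
by rewrite !code_addr0 !cc0r // !mul1r.
Qed.

Lemma dd_sym a b : a \in CSS -> b \in CSS -> dd a b = dd b a.
Proof.
move=> Ca Cb; rewrite /dd [cc b a]ccsym // -Hcomm //.
have := eps_sq Cb Ca => E.
transitivity (cc a b * eps a b * (eps b a * eps b a)); first by rewrite E mulr1.
ring.
Qed.

Lemma dd_R a b c : a \in CSS -> b \in CSS -> c \in CSS ->
  dd a c * dd b (a +c c) = dd b c * dd a (b +c c).
Proof.
move=> Ca Cb Cc; rewrite /dd.
have [_ E1] := Hbim Cb Ca Cc; have [_ E2] := Hbim Ca Cb Cc.
rewrite E1 E2.
transitivity ((cc a c * cc b (a +c c)) * eps a c * eps b a * eps b c); first by ring.
rewrite ccR // -Hcomm //.
have := eps_sq Cb Ca => E.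
transitivity (cc b c * cc a (b +c c) * eps a b * eps a c * eps b c * (eps b a * eps b a)).
  by ring.
by rewrite E; ring.
Qed.

Lemma dd_C a b c : a \in CSS -> b \in CSS -> c \in CSS ->
  dd a b * dd (a +c b) c = dd b c * dd a (b +c c).
Proof.
move=> Ca Cb Cc; have := dd_R Ca Cc Cb.
by rewrite [dd c (a +c b)]dd_sym ?CSD // [dd c b]dd_sym // [c +c b]code_addC.
Qed.

Lemma tex : exists t : Code l r -> R[i], t code0 = 1 /\
  (forall a, a \in CSS -> t a != 0) /\
  (forall a b, a \in CSS -> b \in CSS -> t (a +c b) = dd a b * t a * t b).
Proof.
exact: (@claimG R[i] l r CSS dd CS0 CSD dd_nz dd_sym dd0 dd_C).
Qed.

Lemma ffZ (T : finType) (f : {ffun T -> R[i]}) (k : R[i]) x : (k *: f) x = k * f x.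
Proof. by rewrite ffunE. Qed.
Lemma ff0 (T : finType) x : (0 : {ffun T -> R[i]}) x = 0.
Proof. by rewrite ffunE. Qed.

Lemma ebasE (a g : Code l r) : ebas R a g = (g == a)%:R.
Proof. by rewrite ffunE. Qed.

Section WithT.
Variable t : Code l r -> R[i].
Hypothesis t0 : t code0 = 1.
Hypothesis tnz : forall a, a \in CSS -> t a != 0.
Hypothesis tD : forall a b, a \in CSS -> b \in CSS -> t (a +c b) = dd a b * t a * t b.

Definition yb a := t a *: xb a.

Lemma yb_mem a : yb a \in Sg (lamc a).
Proof. by rewrite memvZ // xb_mem. Qed.

Lemma yb_nz a : a \in CSS -> yb a != 0.
Proof. by move=> Ca; rewrite scaler_eq0 negb_or tnz // xb_nz. Qed.

Lemma yb0 : yb code0 = one.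
Proof. by rewrite /yb t0 scale1r xb0. Qed.

Lemma yy a b : a \in CSS -> b \in CSS -> mul (yb a) (yb b) = eps a b *: yb (a +c b).
Proof.
move=> Ca Cb; rewrite /yb mulZv mulvZ ccE // tD // !scalerA; congr (_ *: _).
rewrite /dd.
transitivity (t a * t b * cc a b * (eps a b * eps a b)); first by rewrite eps_sq // mulr1; ring.
ring.
Qed.

Definition coefy (a : Code l r) (v : V) : R[i] := coord [tuple yb a] 0 v.

Lemma coefy_y a k : a \in CSS -> coefy a (k *: yb a) = k.
Proof.
move=> Ca; rewrite /coefy linearZ /=.
have fr : free [tuple yb a] by rewrite /= seq1_free yb_nz.
by rewrite (coord_free 0 0 fr) eqxx mulr1.
Qed.

Lemma coefyE a v : a \in CSS -> v \in Sg (lamc a) -> v = coefy a v *: yb a.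
Proof.
move=> Ca Hv.
have -> : v = (coefx a v / t a) *: yb a.
  by rewrite /yb scalerA divfK ?tnz // -coefxE.
by rewrite coefy_y.
Qed.

Definition phi (v : V) : {ffun Code l r -> R[i]} :=
  [ffun g => if g \in CSS then coefy g (gr (lamc g) v) else 0].

Lemma phi_lin : linear phi.
Proof.
move=> k u v; apply/ffunP => g; rewrite ffunE ffunE ffZ !ffunE.
case: ifP => _; last by rewrite mulr0 addr0.
by rewrite grcompD grcompZ /coefy linearD linearZ.
Qed.
HB.instance Definition _ := GRing.isLinear.Build _ V {ffun Code l r -> R[i]} *:%R phi phi_lin.

Lemma phi_out g v : g \notin CSS -> phi v g = 0.
Proof. by move=> Cg; rewrite ffunE (negPf Cg). Qed.

Lemma phi_comp a v : a \in CSS -> v \in Sg (lamc a) -> phi v = coefy a v *: ebas R a.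
Proof.
move=> Ca Hv; apply/ffunP => g; rewrite ffZ !ffunE.
case: (eqVneq g a) => [->|nga]; first by rewrite Ca grcomp_id // mulr1.
rewrite mulr0; case: ifP => // Cg.
rewrite (grcomp_out Hv); first by rewrite /coefy linear0.
by apply: contra nga => /eqP /lamc_inj ->.
Qed.

Lemma phi_y a : a \in CSS -> phi (yb a) = ebas R a.
Proof.
move=> Ca; rewrite (phi_comp Ca (yb_mem a)).
by rewrite -[yb a]scale1r coefy_y // scale1r.
Qed.

Lemma AS0_dec v : v \in AS0 Sg -> v = \sum_(a in CSS) phi v a *: yb a.
Proof.
rewrite /AS0 => /memv_sumP [vs Hvs Ev].
have E a : a \in CSS -> phi v a = coefy a (vs a).
  move=> Ca; rewrite ffunE Ca Ev.
  by rewrite (grcomp_sumf (@lamc_inj l r) (P := fun a => a \in CSS)) // Ca.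
rewrite {1}Ev; apply: eq_bigr => a Ca.
by rewrite E // -coefyE // Hvs.
Qed.

Lemma sum_delta (F : Code l r -> R[i]) g :
  \sum_(a in CSS) F a * (g == a)%:R = if g \in CSS then F g else 0.
Proof.
case: ifP => Cg.
  rewrite (bigD1 g) //= eqxx mulr1 big1 ?addr0 // => a /andP[_ nag].
  by rewrite eq_sym (negPf nag) mulr0.
by apply: big1 => a Ca; case: eqVneq => [E|]; [move: Cg; rewrite E Ca | rewrite mulr0].
Qed.

Lemma iso : graded_alg_iso Sg mul one eps phi.
Proof.
split; first by move=> k a b _ _; rewrite linearP.
split.
  move=> a Ha pa0; rewrite (AS0_dec Ha) pa0 big1 // => g _.
  by rewrite ff0 scale0r.
split.
  move=> f fS; exists (\sum_(a in CSS) f a *: yb a).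
    by rewrite /AS0; apply: memv_sumr => a Ca; rewrite memvZ // yb_mem.
  rewrite linear_sum; apply/ffunP => g; rewrite sum_ffunE.
  under eq_bigr => a Ca do rewrite linearZ /= phi_y // ffZ ffunE.
  rewrite sum_delta; case: ifP => // /negbT Cg.
  by rewrite fS.
split; last first.
  split; first by rewrite -yb0 phi_y // CS0.
  by move=> c a Cc Ha; exists (coefy c a); exact: phi_comp.
move=> a b Ha Hb.
rewrite {1}(AS0_dec Ha) {1}(AS0_dec Hb).
have Ev : mul (\sum_(x in CSS) phi a x *: yb x) (\sum_(y in CSS) phi b y *: yb y) =
   \sum_(x in CSS) \sum_(y in CSS) (phi a x * phi b y * eps x y) *: yb (x +c y).
  rewrite mul_suml; apply: eq_bigr => x Cx; rewrite mulZv mul_sumr scaler_sumr.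
  by apply: eq_bigr => y Cy; rewrite mulvZ yy // !scalerA.
rewrite Ev linear_sum; apply/ffunP => c; rewrite sum_ffunE ffunE.
rewrite big_mkcond /=; apply: eq_bigr => x _.
case: (boolP (x \in CSS)) => Cx.
  rewrite linear_sum sum_ffunE big_mkcond /=; apply: eq_bigr => y _.
  case: (boolP (y \in CSS)) => Cy.
    rewrite linearZ /= phi_y ?CSD // ffZ ebasE [c == _]eq_sym.
    by case: eqP => _; [rewrite mulr1; ring | rewrite mulr0].
  by rewrite (phi_out _ Cy) mulr0; case: ifP.
rewrite big1 // => y _.
by rewrite (phi_out _ Cx) mulr0 mul0r; case: ifP.
Qed.
End WithT.

Lemma main_result : (code0 \in CSS /\ forall a b, a \in CSS -> b \in CSS -> code_add a b \in CSS) /\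
  exists phi : V -> {ffun Code l r -> R[i]}, graded_alg_iso Sg mul one eps phi.
Proof.
split; first by split; [exact: CS0 | exact: CSD].
have [t [t0 [tnz tD]]] := tex.
by exists (phi t); exact: iso t0 tnz tD.
Qed.
End Main.

Theorem mainTheorem8 (R : realType) (l r : nat) (V : vectType R[i])
  (Sg : Lambda l r -> {vspace V}) (mul : V -> V -> V) (one : V)
  (eps : Code l r -> Code l r -> R[i]) :
  framed_algebra Sg mul one ->
  simple_framed Sg mul ->
  (forall a b, a \in CS Sg -> b \in CS Sg -> eps a b = 1 \/ eps a b = -1) ->
  (forall a b c, a \in CS Sg -> b \in CS Sg -> c \in CS Sg ->
     eps (code_add a b) c = eps a c * eps b c /\ eps a (code_add b c) = eps a b * eps a c) ->
  (forall a, a \in CS Sg -> eps a a = (-1) ^ (wt a %/ 2)%Z) ->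
  (forall a b, a \in CS Sg -> b \in CS Sg -> eps a b * eps b a = (-1) ^ (wt (code_mul a b))) ->
  (code0 \in CS Sg /\ forall a b, a \in CS Sg -> b \in CS Sg -> code_add a b \in CS Sg) /\
  exists phi : V -> {ffun Code l r -> R[i]}, graded_alg_iso Sg mul one eps phi.
Proof.
move=> Hfr Hsimp Heps1 Hbim _ Hcomm.
exact: (main_result Hfr Hsimp Heps1 Hbim Hcomm).
Qed.
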